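(* Let $B_n=\{2\}\cup\{j \text{ odd}: 3\le j\le n-2\}$. There is a constant $C>0$ such that $|D_X(B_n)|\ge C\left(\sqrt{2+2\sqrt2}\right)^n$ for all sufficiently large $n$.
   Context: For $A\subseteq[n]$, $D_X(A)$ is the set of all linear orders $q$ on $[n]$ such that for every triple $i<j<k$ in $[n]$: if $j\in A$ then $i$ is not ranked last among $\{i,j,k\}$ in $q$, and if $j\notin A$ then $k$ is not ranked first among $\{i,j,k\}$ in $q$. ($B_n$ equals $\{2,3,5,\dots,n-3+(n\bmod 2)\}$, the ''odd $1N33N1$-alternating scheme''.) *)

(* Defs.v *)
From mathcomp Require Import all_boot all_order all_fingroup all_algebra.
Set Implicit Arguments. Unset Strict Implicit. Unset Printing Implicit Defensive.

(* Conventions: [n] = {1,...,n} is represented by 'I_n, the element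
   x : 'I_n standing for the integer x+1.  A linear order q on [n] is
   represented by the permutation q : {perm 'I_n} giving the position of each
   element (q x < q y  means x is ranked before y; "first" = smallest
   position, "last" = largest position). *)

Definition ranked_last n (q : {perm 'I_n}) (x y z : 'I_n) : bool :=
  (q y < q x) && (q z < q x).

Definition ranked_first n (q : {perm 'I_n}) (x y z : 'I_n) : bool :=
  (q x < q y) && (q x < q z).

Definition D_X n (A : {set 'I_n}) : {set {perm 'I_n}} :=
  [set q : {perm 'I_n} | [forall i : 'I_n, forall j : 'I_n, forall k : 'I_n,
     ((i < j) && (j < k)) ==>
       (if j \in A then ~~ ranked_last q i j k else ~~ ranked_first q k i j)]].

Definition B n : {set 'I_n} :=
  [set x : 'I_n | (x.+1 == 2) || [&& odd x.+1, 3 <= x.+1 & x.+1 <= n - 2]].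

(* Main.v *)
Require Import Defs.
From mathcomp Require Import all_boot all_order all_fingroup all_algebra.
From mathcomp Require Import zify ring lra.
Import Order.TTheory GRing.Theory Num.Theory.

Definition ins (t : nat) (w : seq nat) : seq nat :=
  take (size w - t) w ++ size w :: drop (size w - t) w.

Lemma index_ins_gen (s : seq nat) (p x y : nat) : p <= size s -> x != y ->
  index x (take p s ++ y :: drop p s) = index x s + (p <= index x s).
Proof.
elim: s p => [|z s IH] [|p] /=.
- by move=> _ xy; rewrite eq_sym (negbTE xy).
- by [].
- by move=> _ xy; rewrite eq_sym (negbTE xy) addn1.
- move=> hp xy; rewrite ltnS in hp.
  case: (z == x) => //.
  by rewrite IH // addSn.
Qed.

Lemma index_ins_new (s : seq nat) (p y : nat) : p <= size s -> y \notin s ->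
  index y (take p s ++ y :: drop p s) = p.
Proof.
move=> hp hy; rewrite index_cat.
have -> : (y \in take p s) = false.
  by apply/negbTE; apply: contra hy; apply: mem_take.
by rewrite size_take_min /= eqxx addn0; apply/minn_idPl.
Qed.

Definition isperm (w : seq nat) := perm_eq w (iota 0 (size w)).
Definition ainf (x : nat) : bool := (x.+1 == 2) || (odd x.+1 && (3 <= x.+1)).
Definition valid (a : nat -> bool) (w : seq nat) : Prop :=
  forall i j k, i < j -> j < k -> k < size w ->
  if a j then ~~ ((index j w < index i w) && (index k w < index i w))
  else ~~ ((index k w < index i w) && (index k w < index j w)).
Definition free (a : nat -> bool) (w : seq nat) (t : nat) : Prop :=
  forall i, i \in w -> size w - t <= index i w ->
   (forall j, a j -> i < j -> index j w < index i w -> False) /\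
   (forall j, j \in w -> size w - t <= index j w -> i < j -> a j).

Lemma isperm_mem w : isperm w -> forall x, (x \in w) = (x < size w).
Proof. by move=> pw x; rewrite (perm_mem pw) mem_iota. Qed.
Arguments isperm_mem {w}.

Lemma isperm_uniq w : isperm w -> uniq w.
Proof. by move=> pw; rewrite (perm_uniq pw) iota_uniq. Qed.

Lemma size_ins t w : size (ins t w) = (size w).+1.
Proof. by rewrite /ins size_cat /= addnS -size_cat cat_take_drop. Qed.

Lemma isperm_ins t w : isperm w -> isperm (ins t w).
Proof.
move=> pw; rewrite /isperm size_ins -addn1 iotaD add0n /ins.
apply: (@perm_trans _ ([:: size w] ++ take (size w - t) w ++ drop (size w - t) w)).
  exact: permEl (perm_catCA _ [:: size w] _).
by rewrite cat_take_drop perm_catC perm_cat2r.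
Qed.
Arguments isperm_ins t {w}.

Lemma mem_index_lt (w : seq nat) x : (index x w < size w) = (x \in w).
Proof. by rewrite index_mem. Qed.

Lemma index_ins t w x : x != size w ->
  index x (ins t w) = index x w + (size w - t <= index x w).
Proof. by move=> xn; rewrite /ins index_ins_gen // leq_subr. Qed.

Lemma index_ins_max t w : isperm w -> index (size w) (ins t w) = size w - t.
Proof.
move=> pw; rewrite /ins index_ins_new ?leq_subr //.
by rewrite (isperm_mem pw) ltnn.
Qed.
Arguments index_ins_max t {w}.

Lemma shift_lt p a b : (a + (p <= a) < b + (p <= b)) = (a < b).
Proof. by case: (leqP p a) => ha; case: (leqP p b) => hb /=; lia. Qed.

Lemma shift_gt p a : (p < a + (p <= a)) = (p <= a).
Proof. by case: (leqP p a) => ha /=; lia. Qed.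

Lemma ins_valid (a : nat -> bool) (w : seq nat) t : isperm w -> valid a w -> free a w t -> t <= size w ->
  valid a (ins t w).
Proof.
move=> pw vw fw tle i j k ij jk; rewrite size_ins ltnS => kle.
have ne x : x < size w -> x != size w by move=> h; rewrite ltn_eqF.
have iw : i < size w by lia.
have jw : j < size w by lia.
rewrite (index_ins _ _ _ (ne _ iw)) (index_ins _ _ _ (ne _ jw)).
case: (ltnP k (size w)) => kn.
  rewrite (index_ins _ _ _ (ne _ kn)) !shift_lt; exact: vw.
have -> : k = size w by lia.
rewrite index_ins_max // !shift_gt.
have hi : i \in w by rewrite (isperm_mem pw).
have hj : j \in w by rewrite (isperm_mem pw).
case: (boolP (a j)) => aj.
  apply/negP => /andP [h1 h2].
  have [fa _] := fw i hi h2.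
  by apply: (fa j aj ij); rewrite shift_lt in h1.
apply/negP => /andP [h1 h2].
have [_ fb] := fw i hi h1.
by move: (fb j hj h2 ij); rewrite (negbTE aj).
Qed.

Lemma free0 (a : nat -> bool) (w : seq nat) : free a w 0.
Proof.
move=> i hi; rewrite subn0 leqNgt index_mem hi //.
Qed.


Lemma free_A0 (a : nat -> bool) (w : seq nat) L : isperm w -> a (size w) -> free a w L -> L <= size w ->
  free a (ins 0 w) L.+1.
Proof.
move=> pw an fw Lle i hi.
have pw' := isperm_ins 0 pw.
rewrite size_ins subSS.
have idx x : x \in w -> index x (ins 0 w) = index x w.
  move=> xw; rewrite index_ins; last by rewrite ltn_eqF // -(isperm_mem pw).
  by rewrite subn0 leqNgt index_mem xw addn0.
have memw x : x \in ins 0 w -> x != size w -> x \in w.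
  by rewrite (isperm_mem pw') (isperm_mem pw) size_ins ltnS ltn_neqAle andbC => ->.
have ltj j : index j (ins 0 w) < size w -> j \in ins 0 w.
  by move=> h; rewrite -index_mem size_ins ltnS ltnW.
case: (eqVneq i (size w)) => [->|ni] hL.
  split.
    move=> j _ hj; rewrite index_ins_max // subn0 => /ltj.
    by rewrite (isperm_mem pw') size_ins ltnS leqNgt hj.
  move=> j; rewrite (isperm_mem pw') size_ins ltnS => h1 _ h2; lia.
have iw := memw _ hi ni.
rewrite idx // in hL.
have [fa fb] := fw i iw hL.
split.
  move=> j aj ij; rewrite (idx i iw).
  case: (eqVneq j (size w)) => [->|nj].
    rewrite index_ins_max // subn0 => h; move: (iw); rewrite -index_mem => h2.
    by have := ltn_trans h2 h; rewrite ltnn.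
  rewrite index_ins // => h; apply: (fa j aj ij).
  exact: leq_ltn_trans (leq_addr _ _) h.
move=> j hj hjL ij.
case: (eqVneq j (size w)) => [->|nj] //.
have jw := memw _ hj nj.
rewrite idx // in hjL.
exact: fb.
Qed.

Lemma free_N (a : nat -> bool) (w : seq nat) t : isperm w -> ~~ a (size w) -> free a w t -> t <= size w ->
  0 < t -> free a (ins t w) t.
Proof.
move=> pw an fw tle t0 i hi.
have pw' := isperm_ins t pw.
rewrite size_ins => hL.
have insuf x : x != size w -> (size w).+1 - t <= index x (ins t w) ->
   size w - t <= index x w.
  move=> xn; rewrite index_ins //.
  case: (leqP (size w - t) (index x w)) => h //= ; lia.
case: (eqVneq i (size w)) => [ei|ni].
  by move: hL; rewrite ei index_ins_max //; lia.
have iw : i \in w.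
  by move: hi; rewrite (isperm_mem pw') (isperm_mem pw) size_ins ltnS leq_eqVlt (negbTE ni).
have [fa fb] := fw i iw (insuf _ ni hL).
split.
  move=> j aj ij.
  case: (eqVneq j (size w)) => [ej|nj]; first by move: an; rewrite -ej aj.
  by rewrite !index_ins // shift_lt; apply: fa.
move=> j hj hjL ij.
case: (eqVneq j (size w)) => [ej|nj].
  by move: hjL; rewrite ej index_ins_max //; lia.
apply: fb => //; last exact: insuf.
by move: hj; rewrite (isperm_mem pw') (isperm_mem pw) size_ins ltnS leq_eqVlt (negbTE nj).
Qed.

Lemma free_N0 (a : nat -> bool) (w : seq nat) : isperm w -> free a (ins 0 w) 1.
Proof.
move=> pw i hi.
have pw' := isperm_ins 0 pw.
rewrite size_ins subn1 /= => hL.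
have small x : x \in w -> index x (ins 0 w) < size w.
  move=> xw; have h := xw; rewrite -index_mem in h.
  rewrite index_ins; last by rewrite ltn_eqF // -(isperm_mem pw).
  by rewrite subn0 (leqNgt (size w)) h addn0.
have memw x : x \in ins 0 w -> x != size w -> x \in w.
  by rewrite (isperm_mem pw') (isperm_mem pw) size_ins ltnS ltn_neqAle andbC => ->.
case: (eqVneq i (size w)) => [ei|ni]; last first.
  by move: hL; rewrite leqNgt small // memw.
rewrite ei; split.
  move=> j _ hj; rewrite index_ins_max // subn0 => h.
  have : j \in ins 0 w by rewrite -index_mem size_ins ltnS ltnW.
  by rewrite (isperm_mem pw') size_ins ltnS leqNgt hj.
move=> j; rewrite (isperm_mem pw') size_ins ltnS => h1 _ h2; lia.
Qed.

Lemma free_mono (a : nat -> bool) (w : seq nat) t t' : t' <= t -> free a w t -> free a w t'.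
Proof.
move=> tt fw i hi hL.
have hL' : size w - t <= index i w by apply: leq_trans hL; apply: leq_sub2l.
have [fa fb] := fw i hi hL'; split => // j hj hjL; apply: fb => //.
by apply: leq_trans hjL; apply: leq_sub2l.
Qed.

Fixpoint sumto (g : nat -> nat) n := if n is n'.+1 then sumto g n' + g n' else 0.
Fixpoint P k L := if k is k'.+1 then sumto (fun t => P k' (maxn t 1)) L.+2 + L * P k' 1 else 1.

Definition Desc (m : nat) (w : seq nat) (ws : seq (seq nat)) : Prop :=
  uniq ws /\ forall w', w' \in ws ->
    [/\ isperm w', size w' = m, valid ainf w' & filter (fun x => x < size w) w' = w].

Lemma filter_all_perm w : isperm w -> filter (fun x => x < size w) w = w.
Proof. by move=> pw; apply/all_filterP/allP => x; rewrite (isperm_mem pw). Qed.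

Lemma filter_ins t w : isperm w -> filter (fun x => x < size w) (ins t w) = w.
Proof.
move=> pw; rewrite /ins filter_cat /= ltnn -filter_cat cat_take_drop.
exact: filter_all_perm.
Qed.

Lemma filter_filterS n (s : seq nat) :
  filter (fun x => x < n) (filter (fun x => x < n.+1) s) = filter (fun x => x < n) s.
Proof.
rewrite -filter_predI; apply: eq_filter => x /=; apply/andb_idr => h; exact: ltnW.
Qed.

Lemma ins_inj t1 t2 w : isperm w -> t1 <= size w -> t2 <= size w ->
  ins t1 w = ins t2 w -> t1 = t2.
Proof.
move=> pw h1 h2 e; have := index_ins_max t1 pw; rewrite e index_ins_max //; lia.
Qed.

Lemma step (w : seq nat) m L (g : nat -> nat) : isperm w -> L <= size w ->
  (forall t, t <= L -> exists ws, Desc m (ins t w) ws /\ g t <= size ws) ->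
  exists ws, Desc m w ws /\ sumto g L.+1 <= size ws.
Proof.
move=> pw Lw H.
suff: forall n, n <= L.+1 -> exists ws, [/\ uniq ws,
   (forall w', w' \in ws -> [/\ isperm w', size w' = m, valid ainf w' &
       exists2 t, t < n & filter (fun x => x < (size w).+1) w' = ins t w]) &
   sumto g n <= size ws].
  move=> /(_ L.+1 (leqnn _)) [ws [u hws hs]]; exists ws; split => //; split => //.
  move=> w' /hws [p1 p2 p3 [t tn e]]; split => //.
  by rewrite -filter_filterS e filter_ins.
elim=> [|n IH] hn.
  by exists [::].
have [ws [u hws hs]] := IH (ltnW hn).
have [wn [[un hwn] hsn]] := H n (hn : n < L.+1).
exists (ws ++ wn); split.
- rewrite cat_uniq u un /= andbT; apply/hasPn => w' /hwn [_ _ _ e1].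
  apply/negP => /hws [_ _ _ [t tn e2]].
  rewrite size_ins in e1; rewrite e1 in e2.
  have h1 : n <= size w by move: hn Lw; lia.
  have h2 : t <= size w by move: tn hn Lw; lia.
  have := ins_inj n t w pw h1 h2 e2; move: tn; lia.
- move=> w'; rewrite mem_cat => /orP [/hws [p1 p2 p3 [t tn e]]|/hwn [p1 p2 p3 e]].
    by split => //; exists t => //; apply: ltnW.
  by split => //; exists n => //; rewrite -(size_ins n w).
- by rewrite /= size_cat leq_add.
Qed.

Lemma sumtoS g n : sumto g n.+1 = g 0 + sumto (fun t => g t.+1) n.
Proof.
elim: n => [|n IH]; first by rewrite /= addn0 add0n.
have -> : sumto g n.+2 = sumto g n.+1 + g n.+1 by [].
by rewrite IH -addnA.
Qed.

Lemma sumto_const c n : sumto (fun _ => c) n = n * c.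
Proof. by elim: n => [|n IH] //=; rewrite IH mulSn addnC. Qed.

Lemma P_S k L : P k.+1 L = sumto (fun t =>
  sumto (fun t' => P k (maxn t' 1)) (if t == 0 then L.+1 else 0).+1) L.+1.
Proof. by rewrite sumtoS /= sumto_const. Qed.

Lemma ainf_even n : ~~ odd n -> 2 <= n -> ainf n.
Proof. by move=> ev h; rewrite /ainf oddS ev /=; apply/orP; right; lia. Qed.

Lemma ainf_odd n : ~~ odd n -> 2 <= n -> ~~ ainf n.+1.
Proof. by move=> ev h; rewrite /ainf !oddS negbK (negbTE ev) /= orbF; apply/eqP; lia. Qed.

Lemma fam k : forall w L, isperm w -> ~~ odd (size w) -> 2 <= size w ->
  valid ainf w -> free ainf w L -> L <= size w ->
  exists ws, Desc (size w + 2 * k) w ws /\ P k L <= size ws.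
Proof.
elim: k => [|k IH] w L pw ev s2 vw fw Lw.
  exists [:: w]; split => //; split => // w'; rewrite inE => /eqP ->.
  by split => //; [rewrite addn0 | apply: filter_all_perm].
rewrite P_S; apply: step => // t tL.
set c := ins t w.
have pc : isperm c by apply: isperm_ins.
have vc : valid ainf c.
  by apply: ins_valid => //; [apply: free_mono fw | apply: leq_trans Lw].
have sc : size c = (size w).+1 by rewrite size_ins.
have fc : free ainf c (if t == 0 then L.+1 else 0).
  case: eqP => [t0|_]; last exact: free0.
  rewrite /c t0; apply: free_A0 => //; exact: ainf_even.
have Lc : (if t == 0 then L.+1 else 0) <= size c by rewrite sc; case: eqP.
apply: step => // t' ht'.
set c' := ins t' c.
have pc' : isperm c' by apply: isperm_ins.
have sc' : size c' = (size w).+2 by rewrite size_ins sc.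
have vc' : valid ainf c'.
  by apply: ins_valid => //; [apply: free_mono fc | apply: leq_trans Lc].
have fc' : free ainf c' (maxn t' 1).
  case: (posnP t') => [t0|tp].
    by rewrite /c' t0 (_ : maxn 0 1 = 1) //; apply: free_N0.
  have -> : maxn t' 1 = t' by lia.
  apply: free_N => //; last exact: leq_trans Lc.
    rewrite sc; exact: ainf_odd.
  exact: free_mono fc.
have := IH c' (maxn t' 1) pc'; rewrite sc' /= negbK ev => /(_ isT).
have e : (size w).+2 + 2 * k = size w + 2 * k.+1 by lia.
rewrite e; apply => //.
move: Lc ht'; rewrite sc; case: (t == 0); lia.
Qed.

Definition Bp M (x : nat) : bool :=
  (x.+1 == 2) || [&& odd x.+1, 3 <= x.+1 & x.+1 <= M - 2].

Lemma append_valid (a a' : nat -> bool) w : isperm w -> valid a w ->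
  (forall j, j.+2 <= size w -> a' j = a j) -> valid a' (ins 0 w).
Proof.
move=> pw vw ag i j k ij jk; rewrite size_ins ltnS => kle.
have idx x : x < size w -> index x (ins 0 w) = index x w.
  move=> xw; have h : index x w < size w by rewrite index_mem (isperm_mem pw).
  rewrite index_ins; last by rewrite ltn_eqF.
  by rewrite subn0 (leqNgt (size w)) h addn0.
have iw : i < size w by lia.
have jw : j < size w by lia.
rewrite (idx i iw) (idx j jw).
have hi : index i w < size w by rewrite index_mem (isperm_mem pw).
case: (ltnP k (size w)) => kn.
  rewrite (idx k kn) ag; last by lia.
  exact: vw.
have -> : k = size w by lia.
rewrite index_ins_max // subn0.
case: (a' j).
  by apply/negP => /andP [_ h]; have := ltn_trans h hi; rewrite ltnn.
by apply/negP => /andP [h _]; have := ltn_trans h hi; rewrite ltnn.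
Qed.

Lemma append_list (a a' : nat -> bool) s (ws : seq (seq nat)) :
  uniq ws -> (forall w, w \in ws -> [/\ isperm w, size w = s & valid a w]) ->
  (forall j, j.+2 <= s -> a' j = a j) ->
  uniq (map (ins 0) ws) /\
  (forall w, w \in map (ins 0) ws -> [/\ isperm w, size w = s.+1 & valid a' w]).
Proof.
move=> u hws ag; split.
  rewrite map_inj_in_uniq // => w1 w2 /hws [p1 s1 _] /hws [p2 s2 _] e.
  by rewrite -(filter_ins 0 w1 p1) -(filter_ins 0 w2 p2) e s1 s2.
move=> w /mapP [w0 /hws [p0 s0 v0] ->]; split.
- exact: isperm_ins.
- by rewrite size_ins s0.
- apply: (@append_valid a a' w0 p0 v0) => j hj; apply: ag; by rewrite -s0.
Qed.

Lemma fam_all k : exists ws : seq (seq nat), [/\ uniq ws,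
  (forall w, w \in ws -> [/\ isperm w, size w = (2 * k).+2 & valid ainf w]) &
  P k 1 <= size ws].
Proof.
have pw0 : isperm [:: 0; 1] by [].
have vw0 : valid ainf [:: 0; 1] by move=> i j k' /= ij jk kl; lia.
have fw0 : free ainf [:: 0; 1] 1.
  move=> i; rewrite !inE => /orP [/eqP ->|/eqP ->] //= _.
  split.
    move=> j _ h; case: (eqVneq 0 j) => [e|ne]; first by rewrite -e in h.
    by case: (1 == j).
  move=> j; rewrite !inE => /orP [/eqP ->|/eqP ->] //.
have [ws [[u hws] hs]] := fam k [:: 0; 1] 1 pw0 isT isT vw0 fw0 isT.
exists ws; split => // w /hws [p1 p2 p3 _]; split => //; rewrite p2 /=; lia.
Qed.

Lemma famM M : 3 <= M -> exists ws : seq (seq nat), [/\ uniq ws,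
  (forall w, w \in ws -> [/\ isperm w, size w = M & valid (Bp M) w]) &
  P ((M - 3)./2) 1 <= size ws].
Proof.
move=> M3.
have h := odd_double_half (M - 3).
have ho : odd (M - 3) = ~~ odd M by rewrite oddB // addbT.
rewrite -muln2 ho in h.
set k := (M - 3)./2 in h *.
have [ws [u hws hs]] := fam_all k.
have ag : forall s, s <= M - 1 -> forall j, j.+2 <= s -> Bp M j = ainf j.
  move=> s sM j hj.
  rewrite /Bp /ainf (_ : j.+1 <= M - 2 = true) ?andbT //; apply/idP; lia.
case: (boolP (odd M)) => oM; rewrite oM /= in h.
  have e1 : (2 * k).+2 <= M - 1 by lia.
  have [u1 h1] := @append_list ainf (Bp M) _ ws u hws (ag _ e1).
  exists (map (ins 0) ws); split => //; last by rewrite size_map.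
  by move=> w /h1 [p1 s1 v1]; split => //; rewrite s1; lia.
have [u1 h1] := @append_list ainf ainf _ ws u hws (fun j hj => erefl).
have e1 : (2 * k).+3 <= M - 1 by lia.
have [u2 h2] := @append_list ainf (Bp M) _ _ u1 h1 (ag _ e1).
exists (map (ins 0) (map (ins 0) ws)); split => //; last by rewrite !size_map.
by move=> w /h2 [p1 s1 v1]; split => //; rewrite s1; lia.
Qed.

Definition qf M (w : seq nat) : 'I_M -> 'I_M := fun x => insubd x (index (nat_of_ord x) w).
Definition qof M (w : seq nat) : {perm 'I_M} :=
  if injectiveP (qf M w) is ReflectT inj then perm inj else 1%g.

Lemma qfE M w : isperm w -> size w = M -> forall x : 'I_M, nat_of_ord (qf M w x) = index (nat_of_ord x) w.
Proof.
move=> pw sw x; rewrite /qf val_insubd.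
have h : index (nat_of_ord x) w < M by rewrite -[X in _ < X]sw index_mem (isperm_mem pw) sw ltn_ord.
by rewrite h.
Qed.

Lemma qofE M w : isperm w -> size w = M -> forall x : 'I_M, nat_of_ord (qof M w x) = index (nat_of_ord x) w.
Proof.
move=> pw sw.
have inj : injective (qf M w).
  move=> x y e; have := congr1 (@nat_of_ord M) e; rewrite !qfE // => e2.
  apply: val_inj; apply: (@index_inj _ 0 w) e2; by rewrite (isperm_mem pw) sw ltn_ord.
rewrite /qof; case: injectiveP => [inj'|ninj]; last by [].
by move=> x; rewrite permE qfE.
Qed.

Lemma qof_inj M w1 w2 : isperm w1 -> isperm w2 -> size w1 = M -> size w2 = M ->
  qof M w1 = qof M w2 -> w1 = w2.
Proof.
move=> p1 p2 s1 s2 e.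
apply: (@eq_from_nth _ 0); first by rewrite s1 s2.
move=> i hi.
set x := nth 0 w1 i.
have xw1 : x \in w1 by apply: mem_nth.
have xM : x < M by rewrite -s1 -(isperm_mem p1).
have xw2 : x \in w2 by rewrite (isperm_mem p2) s2.
have i1 : index x w1 = i by apply: index_uniq => //; apply: isperm_uniq.
have := qofE M w1 p1 s1 (Ordinal xM); rewrite e qofE //= i1 => i2.
by rewrite -i2 nth_index.
Qed.

Lemma qof_DX M w : isperm w -> size w = M -> valid (Bp M) w -> qof M w \in D_X (B M).
Proof.
move=> pw sw vw; rewrite inE.
apply/forallP => i; apply/forallP => j; apply/forallP => k; apply/implyP => /andP [ij jk].
have := vw i j k ij jk; rewrite sw ltn_ord => /(_ isT).
rewrite /ranked_last /ranked_first !qofE // inE.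
by [].
Qed.

Lemma card_bound M : 3 <= M -> P ((M - 3)./2) 1 <= #|D_X (B M)|.
Proof.
move=> M3; have [ws [u hws hs]] := famM M M3.
apply: (leq_trans hs); rewrite cardE -(size_map (qof M)).
apply: uniq_leq_size.
  rewrite map_inj_in_uniq // => w1 w2 /hws [p1 s1 _] /hws [p2 s2 _].
  exact: qof_inj.
move=> q /mapP [w /hws [p1 s1 v1] ->]; rewrite mem_enum; exact: qof_DX.
Qed.

Lemma P_rec1 k L : P k.+1 L.+1 = P k.+1 L + P k 1 + P k L.+2.
Proof.
have e : forall g n, sumto g n.+1 = sumto g n + g n by [].
change (sumto (fun t => P k (maxn t 1)) L.+3 + L.+1 * P k 1 =
  sumto (fun t => P k (maxn t 1)) L.+2 + L * P k 1 + P k 1 + P k L.+2).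
rewrite (e _ L.+2) (_ : maxn L.+2 1 = L.+2); last by lia.
rewrite mulSn; lia.
Qed.

Lemma P_0 k : P k.+1 0 = 2 * P k 1.
Proof. by rewrite /= add0n addn0 mul2n addnn. Qed.

Lemma Q23 : P 2 1 = 18 /\ P 3 1 = 84.
Proof. by split; vm_compute. Qed.

Local Open Scope ring_scope.

Definition hh (R : rcfType) k L : R := (P k L + P k 1)%:R.
Definition ff (R : rcfType) k L : R := 2 * hh R k L - hh R k L.+2.

Lemma hh_rec (R : rcfType) k L : hh R k.+1 L.+1 = hh R k.+1 L + hh R k L.+2.
Proof. by rewrite /hh -natrD P_rec1; congr (_ %:R); lia. Qed.

Lemma ff0 (R : rcfType) k : ff R k.+1 0 = ff R k 1.
Proof.
rewrite /ff (hh_rec R k 1) (hh_rec R k 0) /hh.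
rewrite (P_rec1 k 0) P_0 !(natrD, natrM); ring.
Qed.

Lemma ffrec (R : rcfType) k L : ff R k.+1 L.+1 = ff R k.+1 L + ff R k L.+2.
Proof. rewrite /ff !hh_rec; ring. Qed.

Lemma ffbound (R : rcfType) k L : ff R k L <= 2 * 4 ^+ k * 2 ^+ L.
Proof.
elim: k L => [|k IH] L.
  rewrite /ff /hh /= expr0 mulr1.
  rewrite natrD.
  have : (1 : R) <= 2 ^+ L by apply: exprn_ege1; lra.
  lra.
elim: L => [|L IHL].
  rewrite ff0 expr0 mulr1 exprS; have := IH 1; rewrite expr1.
  have : (0 : R) <= 4 ^+ k by rewrite exprn_ge0.
  lra.
rewrite ffrec.
have -> : 2 * 4 ^+ k.+1 * 2 ^+ L.+1 = 2 * 4 ^+ k.+1 * 2 ^+ L + 2 * 4 ^+ k * 2 ^+ L.+2 :> R.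
  by rewrite !exprS; ring.
by apply: lerD => //; apply: IH.
Qed.

Lemma Qrec (R : rcfType) k :
  (P k.+2 1)%:R = 4 * (P k.+1 1)%:R + 4 * (P k 1)%:R - ff R k 1 :> R.
Proof.
rewrite /ff /hh (P_rec1 k.+1 0) P_0 (P_rec1 k 1) !(natrD, natrM); ring.
Qed.

Lemma lam_sq (R : rcfType) : (2 + 2 * Num.sqrt (2 : R)) ^+ 2 = 4 * (2 + 2 * Num.sqrt 2) + 4.
Proof.
have s2 : Num.sqrt (2 : R) ^+ 2 = 2 by rewrite sqr_sqrtr //; lra.
rewrite expr2 in s2 *; lra.
Qed.

Lemma lam_le6 (R : rcfType) : 2 + 2 * Num.sqrt (2 : R) <= 6.
Proof.
have s2 : Num.sqrt (2 : R) ^+ 2 = 2 by rewrite sqr_sqrtr //; lra.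
have s0 : 0 <= Num.sqrt (2 : R) by apply: sqrtr_ge0.
rewrite expr2 in s2; nra.
Qed.

Lemma growth (R : rcfType) k :
  (2 + 2 * Num.sqrt (2 : R)) ^+ k.+2 / 16 + 4 ^+ k.+2 <= (P k.+2 1)%:R.
Proof.
set lam := 2 + 2 * Num.sqrt (2 : R).
have l2 : lam ^+ 2 = 4 * lam + 4 by apply: lam_sq.
have l6 : lam <= 6 by apply: lam_le6.
have l0 : 0 <= lam by rewrite /lam addr_ge0 // mulr_ge0 // sqrtr_ge0.
suff: forall k, lam ^+ k.+2 / 16 + 4 ^+ k.+2 <= (P k.+2 1)%:R /\
                lam ^+ k.+3 / 16 + 4 ^+ k.+3 <= (P k.+3 1)%:R by case/(_ k).
elim=> [|m [IH1 IH2]].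
  have [-> ->] := Q23.
  have l3 : lam ^+ 3 = 20 * lam + 16 by rewrite exprS l2; lra.
  rewrite l3 l2; split; lra.
split => //.
rewrite Qrec.
have fb := ffbound R m.+2 1.
have e1 : lam ^+ m.+4 = lam ^+ m.+2 * (4 * lam + 4) by rewrite -l2 -exprD addn2.
have e2 : lam ^+ m.+3 = lam ^+ m.+2 * lam by rewrite exprSr.
rewrite e1; rewrite e2 in IH2.
have e3 : (4 : R) ^+ m.+4 = 4 ^+ m.+2 * 16 by rewrite !exprS; ring.
have e4 : (4 : R) ^+ m.+3 = 4 ^+ m.+2 * 4 by rewrite exprSr.
rewrite e3; rewrite e4 in IH2 fb.
move: IH1 IH2 fb; rewrite expr1.
set a := lam ^+ m.+2; set b := (4 : R) ^+ m.+2.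
move=> IH1 IH2 fb.
have -> : a * (4 * lam + 4) / 16 + b * 16 =
  4 * (a * lam / 16 + b * 4) + 4 * (a / 16 + b) - 2 * b * 2 by ring.
lra.
Qed.

Theorem proposition12 (R : rcfType) :
  exists2 C : R, 0 < C &
    exists N : nat, forall n : nat, (N <= n)%N ->
      C * Num.sqrt (2 + 2 * Num.sqrt 2) ^+ n <= (#|D_X (B n)|)%:R.
Proof.
set lam := 2 + 2 * Num.sqrt (2 : R).
have l0 : 2 <= lam.
  rewrite /lam; have := sqrtr_ge0 (2 : R); lra.
have lp : 0 < lam ^+ 2 by rewrite exprn_gt0 //; lra.
exists (1 / (16 * lam ^+ 2)).
  by rewrite divr_gt0 // mulr_gt0.
exists 7%N => n hn.
have n3 : (3 <= n)%N by lia.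
have hcard := card_bound n n3.
set m := ((n - 3)./2)%N in hcard.
have h := odd_double_half (n - 3).
rewrite -muln2 -/m in h.
have m2 : (2 <= m)%N by move: h; case: (odd (n - 3)) => /=; lia.
have nm : (n <= (m + 2).*2)%N by move: h; rewrite -muln2; case: (odd (n - 3)) => /=; lia.
have hg : lam ^+ m / 16 <= (#|D_X (B n)|)%:R.
  have := growth R (m - 2).
  rewrite (_ : (m - 2).+2 = m)%N; last by lia.
  have : (0 : R) <= 4 ^+ m by rewrite exprn_ge0.
  rewrite -/lam.
  have : ((P m 1)%:R <= (#|D_X (B n)|)%:R :> R) by rewrite ler_nat.
  lra.
have sq : Num.sqrt lam ^+ 2 = lam by rewrite sqr_sqrtr //; lra.
have s1 : 1 <= Num.sqrt lam.
  rewrite -sqrtr1 ler_sqrt; lra.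
have hp : Num.sqrt lam ^+ n <= lam ^+ (m + 2).
  have -> : lam ^+ (m + 2) = Num.sqrt lam ^+ ((m + 2).*2) by rewrite -mul2n exprM sq.
  exact: ler_weXn2l.
have e : lam ^+ (m + 2) = lam ^+ m * lam ^+ 2 by rewrite exprD.
apply: le_trans hg.
rewrite e in hp.
have pos : 0 <= 1 / (16 * lam ^+ 2) by apply: ltW; rewrite divr_gt0 // mulr_gt0.
apply: le_trans (ler_wpM2l pos hp) _.
rewrite le_eqVlt; apply/orP; left; apply/eqP.
field; lra.
Qed.
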